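(* There exists an absolute constant $C>0$ such that the following holds. Let $n\ge1$, $0<q\le 1-\frac2n$ and $\pi\sim\mu_{n,q}$. Let $1\le m\le n$ and let $I=(i_1,\dots,i_m)\subseteq\{1,\dots,n\}$ be an increasing sequence of integers. Then $$\mathbb{P}\big(\pi(i_{k+1})>\pi(i_k)\text{ for all }1\le k\le m-1\big)\le\left(\frac{Cn(1-q)}{m}\right)^m.$$
   Context: For $q>0$ and $n\ge1$, $\mu_{n,q}(\pi)=q^{\mathrm{inv}(\pi)}/Z_{n,q}$ on $S_n$, with $\mathrm{inv}(\pi)$ the number of pairs $i<j$ with $\pi(i)>\pi(j)$ and $Z_{n,q}$ a normalizing constant. *)

(* Defs.v *)
From mathcomp Require Import all_boot all_order all_algebra all_fingroup.
Set Implicit Arguments. Unset Strict Implicit. Unset Printing Implicit Defensive.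
Import Order.TTheory GRing.Theory Num.Theory.
Local Open Scope ring_scope.

Definition inv_count (n : nat) (s : 'S_n) : nat :=
  #|[set p : 'I_n * 'I_n | (p.1 < p.2)%N && (s p.2 < s p.1)%N]|.

Definition mallows_Z (R : numFieldType) (n : nat) (q : R) : R :=
  \sum_(s : 'S_n) q ^+ inv_count s.

Definition mallows (R : numFieldType) (n : nat) (q : R) (s : 'S_n) : R :=
  q ^+ inv_count s / mallows_Z n q.

Definition mallows_prob (R : numFieldType) (n : nat) (q : R)
  (A : pred 'S_n) : R :=
  \sum_(s : 'S_n | A s) mallows q s.

(* Main.v *)
Require Import Defs.
From mathcomp Require Import all_boot all_order all_algebra all_fingroup.
From mathcomp Require Import zify ring lra.
Import Order.TTheory GRing.Theory Num.Theory.
Set Implicit Arguments. Unset Strict Implicit. Unset Printing Implicit Defensive.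

Lemma binle2 n k : 'C(n, k) <= 2 ^ n.
Proof.
elim: n k => [|n IH] [|k] //.
- by rewrite bin0 expn_gt0.
- rewrite binS expnS mul2n -addnn; apply: leq_add; exact: IH.
Qed.

Lemma ffact_ge N k : N ^ k <= (N + k) ^_ k.
Proof.
elim: k => [|k IH]; first by rewrite ffactn0.
by rewrite addnS ffactSS expnS; apply: leq_mul => //; apply: leqW; exact: leq_addr.
Qed.

Lemma powfact N k : N ^ k <= k`! * 2 ^ k * 2 ^ N.
Proof.
apply: (leq_trans (ffact_ge N k)); rewrite -bin_ffact.
rewrite mulnC -mulnA -expnD leq_mul2l (addnC k) binle2 orbT //.
Qed.

Lemma inv_mul n (s t : 'S_n) : inv_count (s * t)%g <= inv_count s + inv_count t.
Proof.
rewrite /inv_count.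
set f := fun p : 'I_n * 'I_n => (s p.1, s p.2).
have finj : injective f.
  by move=> [a b] [c d] [/perm_inj -> /perm_inj ->].
set A := [set p : 'I_n * 'I_n | _ & _].
rewrite -(card_preimset [set p : 'I_n * 'I_n | (p.1 < p.2)%N && (t p.2 < t p.1)%N] finj).
set B := [set p : 'I_n * 'I_n | (p.1 < p.2)%N && (s p.2 < s p.1)%N].
set C := f @^-1: _.
apply: (leq_trans (subset_leq_card (_ : A \subset B :|: C))).
  apply/subsetP => -[x y]; rewrite !inE /= !permM => /andP[xy txy].
  case: (ltngtP (s x) (s y)) => h.
  - by rewrite txy orbT.
  - by rewrite xy.
  - by move: h => /val_inj/perm_inj h; rewrite h ltnn in xy.
by rewrite cardsU leq_subr.
Qed.

Definition convex {n} (W : {set 'I_n}) := forall x y z : 'I_n,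
  x \in W -> z \in W -> (x < y)%N -> (y < z)%N -> y \in W.

Lemma inv_perm_on n (K W : {set 'I_n}) (t : 'S_n) :
  K \subset W -> convex W -> perm_on K t -> inv_count t <= 2 * (#|K| * #|W|).
Proof.
move=> KW cW pt; rewrite /inv_count.
apply: (leq_trans (subset_leq_card (_ : _ \subset setX K W :|: setX W K))).
  apply/subsetP => -[x y]; rewrite !inE /= => /andP[xy txy].
  have tK z : z \in K -> t z \in K by move=> zK; rewrite perm_closed.
  case xK: (x \in K); case yK: (y \in K) => /=.
  - by rewrite (subsetP KW _ yK).
  - rewrite (out_perm pt (negbT yK)) in txy.
    apply/orP; left; apply: (cW x y (t x)) => //; first exact: (subsetP KW).
    exact: (subsetP KW _ (tK _ xK)).
  - rewrite (out_perm pt (negbT xK)) in txy.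
    by rewrite andbT; apply: (cW (t y) x y) => //; apply: (subsetP KW);
      rewrite ?tK.
  - by rewrite (out_perm pt (negbT xK)) (out_perm pt (negbT yK)) ltnNge ltnW in txy.
rewrite cardsU !cardsX mulnC mul2n -addnn (mulnC #|W|).
exact: leq_subr.
Qed.

Definition incr {n} (S : {set 'I_n}) (s : 'S_n) : bool :=
  [forall x in S, forall y in S, (x < y)%N ==> (s x < s y)%N].

Lemma incrP n (S : {set 'I_n}) (s : 'S_n) :
  reflect (forall x y, x \in S -> y \in S -> (x < y)%N -> (s x < s y)%N) (incr S s).
Proof.
apply: (iffP forall_inP) => [h x y xS yS xy | h x xS].
  by move/forall_inP: (h x xS) => /(_ y yS) /implyP; apply.
by apply/forall_inP => y yS; apply/implyP; apply: h.
Qed.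

Definition rk {n} (K : {set 'I_n}) (x : 'I_n) := #|[set y in K | (y < x)%N]|.

Lemma rk_lt n (K : {set 'I_n}) (a b : 'I_n) : a \in K -> (a < b)%N -> rk K a < rk K b.
Proof.
move=> aK ab; apply: proper_card; apply/properP; split.
  apply/subsetP => y; rewrite !inE => /andP[-> ya] /=; exact: ltn_trans ya ab.
by exists a; rewrite !inE ?aK ?ab ?ltnn.
Qed.

Lemma rk_mono n (K : {set 'I_n}) (r : 'S_n) : perm_on K r ->
  (forall x y, x \in K -> y \in K -> (x < y)%N -> (r x < r y)%N) ->
  forall x, x \in K -> rk K x <= rk K (r x).
Proof.
move=> pr mr x xK; rewrite /rk -(card_imset (mem [set y in K | (y < x)%N]) (@perm_inj _ r)).
apply: subset_leq_card; apply/subsetP => z /imsetP [y]; rewrite !inE => /andP[yK yx] ->.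
by rewrite perm_closed // yK /= mr.
Qed.

Lemma rigid n (K : {set 'I_n}) (r : 'S_n) : perm_on K r ->
  (forall x y, x \in K -> y \in K -> (x < y)%N -> (r x < r y)%N) -> r = 1%g.
Proof.
move=> pr mr.
have pr' := perm_onV pr.
have mr' : forall x y, x \in K -> y \in K -> (x < y)%N -> ((r^-1)%g x < (r^-1)%g y)%N.
  move=> x y xK yK xy.
  have x'K : (r^-1)%g x \in K by rewrite perm_closed.
  have y'K : (r^-1)%g y \in K by rewrite perm_closed.
  case: (ltngtP ((r^-1)%g x) ((r^-1)%g y)) => // h.
  - by have := mr _ _ y'K x'K h; rewrite !permKV ltnNge ltnW.
  - by move: h => /val_inj/perm_inj h; rewrite h ltnn in xy.
apply/permP => x; rewrite perm1.
case xK: (x \in K); last by rewrite (out_perm pr (negbT xK)).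
have rxK : r x \in K by rewrite perm_closed.
have e1 := rk_mono pr mr xK.
have e2 := rk_mono pr' mr' rxK; rewrite permK in e2.
case: (ltngtP x (r x)) => h; last by apply: val_inj.
- by have := rk_lt xK h; rewrite ltnNge e2.
- by have := rk_lt rxK h; rewrite ltnNge e1.
Qed.

Local Open Scope ring_scope.

Lemma sum_sub (R : numDomainType) (T : finType) (X : {set T}) (P : pred T) (F : T -> R) :
  (forall i, 0 <= F i) -> (forall i, i \in X -> P i) ->
  \sum_(i in X) F i <= \sum_(i | P i) F i.
Proof.
move=> F0 XP; rewrite [X in X <= _]big_mkcond [X in _ <= X]big_mkcond /=.
apply: ler_sum => i _; case iX: (i \in X); first by rewrite XP.
by case: (P i).
Qed.

Section Block.
Variables (R : realFieldType) (n : nat) (q : R).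
Hypotheses (q0 : 0 < q) (q1 : q <= 1).

Definition wt (s : 'S_n) : R := q ^+ inv_count s.
Definition Wt (S : {set 'I_n}) : R := \sum_(s | incr S s) wt s.

Lemma wt_ge0 s : 0 <= wt s.
Proof. by rewrite /wt exprn_ge0 // ltW. Qed.

Lemma Wt_ge0 S : 0 <= Wt S.
Proof. by apply: sumr_ge0 => s _; apply: wt_ge0. Qed.

Lemma block (S W : {set 'I_n}) : convex W ->
  Wt S * (#|S :&: W|`!)%:R * q ^+ (2 * (#|S :&: W| * #|W|)) <= Wt (S :\: W).
Proof.
move=> cW; set K := S :&: W; set B := (2 * (#|K| * #|W|))%N.
have KW : K \subset W by apply: subsetIr.
have KS : K \subset S by apply: subsetIl.
have step1 : (#|K|`!)%:R * q ^+ B <= \sum_(t | perm_on K t) wt t.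
  rewrite -card_perm -sum1_card natr_sum mulr_suml.
  apply: ler_sum => t pt; rewrite mul1r /wt.
  apply: ler_wiXn2l => //; first exact: ltW.
  exact: inv_perm_on.
apply: (@le_trans _ _ (Wt S * \sum_(t | perm_on K t) wt t)).
  by rewrite -mulrA; apply: ler_wpM2l; [apply: Wt_ge0|].
rewrite /Wt big_distrl /=.
apply: (@le_trans _ _ (\sum_(s | incr S s) \sum_(t | perm_on K t) wt (t * s)%g)).
  apply: ler_sum => s _; rewrite big_distrr /=; apply: ler_sum => t _.
  rewrite /wt -exprD; apply: ler_wiXn2l => //; first exact: ltW.
  by rewrite addnC; apply: inv_mul.
rewrite pair_big_dep /=.
set A := [set p : 'S_n * 'S_n | incr S p.1 && perm_on K p.2].
rewrite (eq_bigl (fun p => p \in A)); last by move=> p; rewrite inE.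
have finj : {in A &, injective (fun p : 'S_n * 'S_n => (p.2 * p.1)%g)}.
  move=> [s t] [s' t']; rewrite !inE /= => /andP[sS pt] /andP[s'S pt'] e.
  have es : s = (t^-1 * t' * s')%g by rewrite -mulgA -e mulKg.
  set r := (t^-1 * t')%g in es.
  have pr : perm_on K r by apply: perm_onM => //; apply: perm_onV.
  have r1 : r = 1%g.
    apply: (rigid pr) => x y xK yK xy.
    have rxK : r x \in K by rewrite perm_closed.
    have ryK : r y \in K by rewrite perm_closed.
    have := (incrP _ _ sS) x y (subsetP KS _ xK) (subsetP KS _ yK) xy.
    rewrite es (permM r s' x) (permM r s' y).
    case: (ltngtP (r x) (r y)) => // h.
    - move=> hh; have := (incrP _ _ s'S) _ _ (subsetP KS _ ryK) (subsetP KS _ rxK) h.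
      by rewrite ltnNge ltnW.
    - by move: h => /val_inj/perm_inj h; rewrite h ltnn in xy.
  rewrite r1 mul1g in es; rewrite es.
  by have := mulKVg t t'; rewrite -/r r1 mulg1 => ->.
rewrite -(big_imset _ finj) /=.
apply: sum_sub; first by move=> i; apply: wt_ge0.
move=> p /imsetP [[s t]]; rewrite inE /= => /andP[sS pt] ->.
apply/incrP => x y; rewrite !inE => /andP[xW xS] /andP[yW yS] xy.
have xK : x \notin K by rewrite inE (negbTE xW) andbF.
have yK : y \notin K by rewrite inE (negbTE yW) andbF.
rewrite !permM (out_perm pt xK) (out_perm pt yK).
exact: (incrP _ _ sS).
Qed.

End Block.

Section Iter.
Variables (R : realFieldType) (n : nat) (q : R).
Hypotheses (q0 : 0 < q) (q1 : q <= 1).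
Variables (L N : nat) (S : {set 'I_n}).
Hypothesis L0 : (0 < L)%N.

Definition Wj j := [set x : 'I_n | (x %/ L)%N == j].
Definition Tj j := [set x in S | ((x %/ L)%N < j)%N].

Lemma Wj_convex j : convex (Wj j).
Proof.
move=> x y z; rewrite !inE => /eqP xj /eqP zj xy yz.
rewrite eqn_leq -{1}zj -xj; apply/andP; split; apply: leq_div2r; exact: ltnW.
Qed.

Lemma Wj_card j : (#|Wj j| <= L)%N.
Proof.
pose f (x : 'I_n) : 'I_L := Ordinal (ltn_pmod x L0).
rewrite -(@card_in_imset _ _ f).
  by apply: leq_trans (max_card _) _; rewrite card_ord.
move=> x y; rewrite !inE => /eqP xj /eqP yj [e].
by apply: val_inj; rewrite /= (divn_eq x L) (divn_eq y L) xj yj e.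
Qed.

Lemma powfactR (k : nat) :
  (N%:R : R) ^+ k <= (k`!)%:R * 2%:R ^+ k * 2%:R ^+ N.
Proof. by rewrite -!natrX -!natrM ler_nat powfact. Qed.

Lemma iter_claim j :
  Wt q (Tj j) * (N%:R) ^+ #|Tj j| * q ^+ (2 * L * #|Tj j|)
    <= Wt q (set0 : {set 'I_n}) * 2%:R ^+ #|Tj j| * 2%:R ^+ (N * j).
Proof.
elim: j => [|j IH].
  have -> : Tj 0 = set0 by apply/setP => x; rewrite !inE ltn0 andbF.
  by rewrite cards0 !muln0 !expr0 !mulr1.
set K := Tj j.+1 :&: Wj j.
have eD : Tj j.+1 :\: Wj j = Tj j.
  apply/setP => x; rewrite !inE ltnS leq_eqVlt.
  by case: eqP => [->|_]; rewrite ?ltnn ?andbF //= ?andbT.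
have eC : #|Tj j.+1| = (#|Tj j| + #|K|)%N.
  by rewrite -(cardsID (Wj j) (Tj j.+1)) eD addnC.
have hb := block q0 q1 (Tj j.+1) (@Wj_convex j).
rewrite eD -/K in hb.
set a := Wt q (Tj j.+1) in hb *.
set t := #|Tj j| in IH eC *.
set k := #|K| in hb eC *.
have a0 : 0 <= a by apply: (Wt_ge0 q0).
have qk : q ^+ (2 * L * k) <= q ^+ (2 * (k * #|Wj j|)).
  apply: ler_wiXn2l => //; first exact: ltW.
  by rewrite -mulnA leq_pmul2l // [X in (X <= _)%N]mulnC leq_mul2r Wj_card orbT.
have e2 : 0 <= (2%:R : R) ^+ k * 2%:R ^+ N by rewrite mulr_ge0 // exprn_ge0 // ler0n.
have h1 : a * N%:R ^+ k * q ^+ (2 * L * k)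
    <= 2%:R ^+ k * 2%:R ^+ N * Wt q (Tj j).
  have m1 : a * N%:R ^+ k * q ^+ (2 * L * k) <=
      a * ((k`!)%:R * 2%:R ^+ k * 2%:R ^+ N) * q ^+ (2 * (k * #|Wj j|)).
    apply: ler_pM => //.
    - by rewrite mulr_ge0 // exprn_ge0 // ler0n.
    - by rewrite exprn_ge0 // ltW.
    - by apply: ler_wpM2l => //; apply: powfactR.
  apply: (le_trans m1).
  rewrite [X in X <= _](_ : _ = 2%:R ^+ k * 2%:R ^+ N * (a * (k`!)%:R * q ^+ (2 * (k * #|Wj j|)))); last by ring.
  by apply: ler_wpM2l.
have X0 : 0 <= (N%:R : R) ^+ t * q ^+ (2 * L * t).
  by rewrite mulr_ge0 // exprn_ge0 // ?ler0n // ltW.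
rewrite eC mulnDr !exprD mulnS exprD.
apply: (@le_trans _ _ ((2%:R ^+ k * 2%:R ^+ N * Wt q (Tj j)) * (N%:R ^+ t * q ^+ (2 * L * t)))).
  rewrite [X in X <= _](_ : _ = (a * N%:R ^+ k * q ^+ (2 * L * k)) * (N%:R ^+ t * q ^+ (2 * L * t))); last by ring.
  by apply: ler_wpM2r.
rewrite [X in X <= _](_ : _ = (2%:R ^+ k * 2%:R ^+ N) * (Wt q (Tj j) * N%:R ^+ t * q ^+ (2 * L * t))); last by ring.
rewrite [X in _ <= X](_ : _ = (2%:R ^+ k * 2%:R ^+ N) * (Wt q (set0 : {set 'I_n}) * 2%:R ^+ t * 2%:R ^+ (N * j))); last by ring.
by apply: ler_wpM2l.
Qed.

Lemma iter_final b : (n <= b * L)%N ->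
  Wt q S * (N%:R) ^+ #|S| * q ^+ (2 * L * #|S|)
    <= Wt q (set0 : {set 'I_n}) * 2%:R ^+ #|S| * 2%:R ^+ (N * b).
Proof.
move=> hb; have -> : S = Tj b.
  apply/setP => x; rewrite inE; case: (x \in S) => //=.
  by rewrite ltn_divLR // (leq_trans (ltn_ord x) hb).
exact: iter_claim.
Qed.

End Iter.

Lemma bernoulli (R : realFieldType) (e : R) k : 0 <= e -> e <= 1 ->
  1 - k%:R * e <= (1 - e) ^+ k.
Proof.
move=> e0 e1; elim: k => [|k IH]; first by rewrite mul0r subr0 expr0.
have p0 : 0 <= (1 - e) ^+ k by rewrite exprn_ge0 // subr_ge0.
rewrite exprS -natr1.
have h : 0 <= (1 - e) * ((1 - e) ^+ k - (1 - k%:R * e)).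
  by rewrite mulr_ge0 // subr_ge0.
have k0 : 0 <= k%:R * e * e :> R by rewrite mulr_ge0 // mulr_ge0 // ler0n.
nra.
Qed.

Lemma event_incr n m (I : 'I_m -> 'I_n) (s : 'S_n) :
  (forall k l : 'I_m, (k < l)%N -> (I k < I l)%N) ->
  [forall k : 'I_m, forall l : 'I_m, ((l : nat) == k.+1) ==> (s (I k) < s (I l))%N] ->
  incr [set I k | k in 'I_m] s.
Proof.
move=> Im /forallP E.
have step : forall k l : 'I_m, (l : nat) = k.+1 -> (s (I k) < s (I l))%N.
  by move=> k l e; move/forallP: (E k) => /(_ l) /implyP; apply; apply/eqP.
have all : forall (k : 'I_m) j (hj : (j < m)%N), (k < j)%N -> (s (I k) < s (I (Ordinal hj)))%N.
  move=> k; elim=> [|j IH] hj kj //.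
  have hj' : (j < m)%N by apply: ltnW.
  rewrite ltnS leq_eqVlt in kj; case/orP: kj => [/eqP kj | kj].
    apply: step => /=; rewrite -kj //.
  apply: (ltn_trans (IH hj' kj)); exact: step.
apply/incrP => x y /imsetP [k _ ->] /imsetP [l _ ->] xy.
have kl : (k < l)%N.
  case: (ltngtP k l) => // h.
    by have := Im _ _ h; rewrite ltnNge ltnW.
  by move: h => /val_inj h; rewrite h ltnn in xy.
have -> : l = Ordinal (ltn_ord l) by apply: val_inj.
exact: all.
Qed.

Theorem proposition4p4 :
  exists C : nat, (0 < C)%N /\
  forall (R : realFieldType) (n : nat) (q : R),
    (1 <= n)%N -> 0 < q -> q <= 1 - 2%:R / n%:R ->
    forall (m : nat) (I : 'I_m -> 'I_n),
      (1 <= m)%N -> (m <= n)%N ->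
      (forall k l : 'I_m, (k < l)%N -> (I k < I l)%N) ->
      mallows_prob q
        (fun s : 'S_n => [forall k : 'I_m, forall l : 'I_m,
                           ((l : nat) == k.+1) ==> (s (I k) < s (I l))%N])
      <= (C%:R * n%:R * (1 - q) / m%:R) ^+ m.
Proof.
exists 256%N; split => //.
move=> R n q hn q0 hq m I hm1 hmn Im.
set E := (fun s : 'S_n => _).
set e := 1 - q.
have n0 : (0 : R) < n%:R by rewrite ltr0n.
have m0 : (0 : R) < m%:R by rewrite ltr0n.
have mn : (m%:R : R) <= n%:R by rewrite ler_nat.
have e2 : 2%:R <= e * n%:R by rewrite -ler_pdivrMr // /e; lra.
have e0 : 0 <= e by nra.
have q1 : q <= 1 by rewrite /e in e0; lra.
set Z := mallows_Z n q.
have ZW : Z = Wt q (set0 : {set 'I_n}).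
  rewrite /Z /mallows_Z /Wt /wt; apply: eq_bigl => s.
  by apply/esym/incrP => x y; rewrite inE.
have Zpos : 0 < Z.
  rewrite /Z /mallows_Z (bigD1 1%g) //=.
  have t1 : 0 < q ^+ inv_count (1%g : 'S_n) by rewrite exprn_gt0.
  have t2 : 0 <= \sum_(i | i != 1%g) q ^+ inv_count (i : 'S_n).
    by apply: sumr_ge0 => i _; rewrite exprn_ge0 // ltW.
  lra.
have Pr_eq : mallows_prob q E = (\sum_(s | E s) wt q s) / Z.
  by rewrite /mallows_prob /mallows mulr_suml.
set S := [set I k | k in 'I_m].
have PW : \sum_(s | E s) wt q s <= Wt q S.
  rewrite /Wt big_mkcond [X in _ <= X]big_mkcond /=; apply: ler_sum => s _.
  case Es: (E s); first by rewrite (event_incr Im Es).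
  by case: (incr S s) => //; apply: wt_ge0.
have P1 : mallows_prob q E <= 1.
  rewrite Pr_eq ler_pdivrMr // mul1r ZW /Wt.
  rewrite big_mkcond [X in _ <= X]big_mkcond /=; apply: ler_sum => s _.
  have -> : incr (set0 : {set 'I_n}) s by apply/incrP => x y; rewrite inE.
  by case: (E s) => //; apply: wt_ge0.
case: (lerP (m%:R) (256%:R * n%:R * e)) => hc.
  apply: (le_trans P1); apply: exprn_ege1.
  by rewrite ler_pdivlMr // mul1r.
have e4 : 4%:R * e <= 1 by nra.
pose P := fun l : nat => (l <= n)%N && ((4 * l)%:R * e <= 1).
have exP : exists l, P l by exists 1%N; rewrite /P hn /= ?muln1.
have ubP : forall l, P l -> (l <= n)%N by move=> l /andP[].
case: (ex_maxnP exP ubP) => L /andP[Ln L4] Lmax.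
have L1 : (1 <= L)%N by apply: Lmax; rewrite /P hn /= ?muln1.
have L0 : (0 < L)%N by [].
have Lltn : (L < n)%N.
  rewrite ltn_neqAle Ln andbT; apply/eqP => LN.
  move: L4; rewrite LN natrM => h; nra.
have L8 : 1 < 8%:R * L%:R * e.
  have nP : ~~ P L.+1.
    by apply/negP => /Lmax; rewrite ltnn.
  move: nP; rewrite /P Lltn /= -ltNge natrM -natr1 => h.
  have : (1 : R) <= L%:R by rewrite ler1n.
  nra.
set b := ((n %/ L)%N).+1.
have hb1 : (n <= b * L)%N by apply: ltnW; apply: ltn_ceil.
have hb2 : (b * L <= 2 * n)%N.
  rewrite /b mulSn mul2n -addnn addnC; apply: leq_add; last exact: ltnW.
  exact: leq_divM.
have b0 : (0 < b)%N by [].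
have hbR : (b%:R : R) * L%:R <= 2%:R * n%:R by rewrite -!natrM ler_nat.
have b16 : (b%:R : R) < 16%:R * n%:R * e.
  have hb0 : (0 : R) < b%:R by rewrite ltr0n.
  have h1 : (b%:R : R) < b%:R * (8%:R * L%:R * e) by rewrite -{1}(mulr1 (b%:R)) ltr_pM2l.
  have h2 : (b%:R : R) * (8%:R * L%:R * e) = 8%:R * e * (b%:R * L%:R) by ring.
  have h3 : 8%:R * e * (b%:R * L%:R) <= 8%:R * e * (2%:R * n%:R) :> R.
    by apply: ler_wpM2l => //; rewrite mulr_ge0 // ler0n.
  lra.
have bm : (b <= m)%N.
  rewrite -(ler_nat R); apply: ltW; apply: (lt_trans b16); nra.
set N := (m %/ b)%N.
have N1 : (0 < N)%N by rewrite divn_gt0.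
have hN1 : (N * b <= m)%N by apply: leq_divM.
have hN2 : (m < 2 * N * b)%N.
  apply: (leq_trans (ltn_ceil m b0)); rewrite -/N leq_mul2r; apply/orP; right; by rewrite mul2n -addnn -addn1 leq_add2l.
have cardS : #|S| = m.
  rewrite card_imset ?card_ord // => k l ekl.
  case: (ltngtP k l) => [h|h|h]; last exact: val_inj.
  - by have := Im _ _ h; rewrite ekl ltnn.
  - by have := Im _ _ h; rewrite ekl ltnn.
have it := iter_final q0 q1 N S L0 hb1.
rewrite cardS -ZW in it.
have e1 : e <= 1 by lra.
have q2L : 1 / 2%:R <= q ^+ (2 * L).
  have hB := bernoulli (2 * L) e0 e1.
  rewrite (_ : 1 - e = q) in hB; last by rewrite /e; ring.
  rewrite natrM in hB; rewrite natrM in L4.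
  apply: le_trans hB; nra.
have qm : (1 / 2%:R) ^+ m <= q ^+ (2 * L * m).
  rewrite exprM; apply: lerXn2r => //; rewrite nnegrE.
  - by rewrite divr_ge0 // ler0n.
  - by rewrite exprn_ge0 // ltW.
have p2 : (2%:R : R) ^+ (N * b) <= 2%:R ^+ m.
  by apply: ler_weXn2l => //; rewrite ler1n.
set A := Wt q S.
have A0 : 0 <= A by apply: (Wt_ge0 q0).
set u := N%:R / 8%:R : R.
have u0 : 0 < u by rewrite /u divr_gt0 // ltr0n.
have key : A * u ^+ m <= Z.
  have h22 : (0 : R) < 2%:R ^+ m * 2%:R ^+ m by rewrite mulr_gt0 // exprn_gt0 // ltr0n.
  rewrite -(ler_pM2r h22).
  have eu : u ^+ m * (2%:R ^+ m * 2%:R ^+ m) = N%:R ^+ m * (1 / 2%:R) ^+ m.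
    by rewrite -!exprMn; congr (_ ^+ _); rewrite /u; field.
  rewrite -mulrA eu mulrA.
  have Nm0 : (0 : R) <= N%:R ^+ m by rewrite exprn_ge0 // ler0n.
  apply: (le_trans (_ : _ <= A * N%:R ^+ m * q ^+ (2 * L * m))).
    by apply: ler_wpM2l => //; rewrite mulr_ge0.
  apply: (le_trans it); rewrite -mulrA; apply: ler_wpM2l; first exact: ltW.
  by apply: ler_wpM2l => //; rewrite exprn_ge0 // ler0n.
rewrite Pr_eq.
apply: (@le_trans _ _ (A / Z)).
  by apply: ler_wpM2r => //; rewrite invr_ge0 ltW.
apply: (@le_trans _ _ (u^-1 ^+ m)).
  rewrite ler_pdivrMr // exprVn mulrC ler_pdivlMr //.
  by rewrite exprn_gt0.
apply: lerXn2r; rewrite ?nnegrE.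
- by rewrite invr_ge0 ltW.
- by rewrite divr_ge0 // ?ler0n // mulr_ge0 // mulr_ge0 // ler0n.
have hN2R : (m%:R : R) < 2%:R * N%:R * b%:R by rewrite -!natrM ltr_nat.
have N0R : (0 : R) < N%:R by rewrite ltr0n.
rewrite /u invf_div ler_pdivrMr // mulrAC ler_pdivlMr //.
nra.
Qed.
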